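(* Let $(X,d)$ be a compact metric space and $f_{1,\infty}=\{f_n\}$ a sequence of continuous surjective maps $f_n:X\to X$ converging uniformly to $f:X\to X$, such that $\{f_n^k\}_{k\in\mathbb{N}}$ converges collectively to $\{f^k\}_{k\in\mathbb{N}}$ and $f_{1,\infty}$ is feebly open. Then $(X,f_{1,\infty})$ is strongly multi-sensitive if and only if $(X,f)$ is strongly multi-sensitive; and $(X,f_{1,\infty})$ is $\mathcal{N}$-sensitive if and only if $(X,f)$ is $\mathcal{N}$-sensitive.
   Context: Write $f_i^n=f_{n+i-1}\circ\cdots\circ f_i$, $f_i^0=\mathrm{id}$; an autonomous system $(X,f)$ is the case $f_n=f$ for all $n$ (so $f_i^n=f^n$). Collective convergence: for every $\epsilon>0$ there is $N_0\in\mathbb{N}$ such that $D(f_N^k,f^k)<\epsilon$ for all $N\ge N_0$ and all $k\in\mathbb{N}$, where $D$ is the supremum metric on continuous self-maps of $X$. Feebly open: $\mathrm{int}(f_n(U))\ne\varnothing$ for every nonempty open $U\subseteq X$ and every $n$. $f_{1,\infty}^{[k]}=\{f^k_{k(n-1)+1}\}_{n=1}^\infty$ (its $n$-fold composition from index $1$ is $f_1^{kn}$). $N_{f_{1,\infty}}(V,\delta)=\{n\in\mathbb{N}:\exists u,v\in V,\ d(f_1^n(u),f_1^n(v))>\delta\}$. For $\mathbf{v}=(v_1,\dots,v_r)\in\mathbb{N}^r$, the system is multi-sensitive with respect to $\mathbf{v}$ if there is $\delta>0$ such that $\bigcap_{i=1}^r N_{f_{1,\infty}^{[v_i]}}(U_i,\delta)\ne\varnothing$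 for all nonempty open $U_1,\dots,U_r$; $\mathcal{N}$-sensitive if multi-sensitive with respect to $(1,\dots,n)$ for every $n$; strongly multi-sensitive if multi-sensitive with respect to every vector in $\mathbb{N}^r$, for every $r$. *)

(* Defs.v *)
From HB Require Import structures.
From mathcomp Require Import all_boot all_order all_algebra.
From mathcomp Require Import all_classical all_reals all_analysis.
Set Implicit Arguments. Unset Strict Implicit. Unset Printing Implicit Defensive.
Import Order.TTheory GRing.Theory Num.Theory.
Local Open Scope classical_set_scope.
Local Open Scope ring_scope.

Section Defs.
Context {R : realType} {X : metricType R}.

Definition supD (g h : X -> X) : R :=
  sup (range (fun x => mdist (g x) (h x))).

(* Non-autonomous system: sequence f : nat -> X -> X, only indices n >= 1 used.
   comp f i n = f_i^n = f_{n+i-1} o ... o f_i, comp f i 0 = id. *)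
Fixpoint comp (f : nat -> X -> X) (i n : nat) : X -> X :=
  match n with
  | 0 => id
  | n'.+1 => f (i + n')%N \o comp f i n'
  end.

Definition autonomous (g : X -> X) : nat -> X -> X := fun _ => g.

Definition blk (f : nat -> X -> X) (k : nat) : nat -> X -> X :=
  fun n => comp f (k * (n - 1) + 1)%N k.

Definition Nset (f : nat -> X -> X) (V : set X) (delta : R) : set nat :=
  [set n | (0 < n)%N /\ exists u v, V u /\ V v /\
     delta < mdist (comp f 1 n u) (comp f 1 n v)].

Definition multi_sensitive_wrt (f : nat -> X -> X) (r : nat) (v : 'I_r -> nat) :=
  exists2 delta : R, 0 < delta &
    forall U : 'I_r -> set X,
      (forall i, open (U i) /\ U i !=set0) ->
      exists n, forall i, Nset (blk f (v i)) (U i) delta n.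

Definition N_sensitive (f : nat -> X -> X) :=
  forall n : nat, (0 < n)%N ->
    multi_sensitive_wrt f (fun i : 'I_n => (nat_of_ord i).+1).

Definition strongly_multi_sensitive (f : nat -> X -> X) :=
  forall (r : nat) (v : 'I_r -> nat), (0 < r)%N -> (forall i, (0 < v i)%N) ->
    multi_sensitive_wrt f v.

Definition collectively_converges (f : nat -> X -> X) (g : X -> X) :=
  forall eps : R, 0 < eps -> exists N0 : nat, forall N k : nat,
    (N0 <= N)%N -> (0 < N)%N -> (0 < k)%N ->
    supD (comp f N k) (comp (autonomous g) 1 k) < eps.

Definition feebly_open (f : nat -> X -> X) :=
  forall n : nat, (0 < n)%N -> forall U : set X, open U -> U !=set0 ->
    (f n @` U)° !=set0.

End Defs.

(* Main.v *)
Require Import Defs.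
From HB Require Import structures.
From mathcomp Require Import all_boot all_order all_algebra.
From mathcomp Require Import all_classical all_reals all_analysis.
From mathcomp Require Import lra zify.
Import Order.TTheory GRing.Theory Num.Theory.
Import numFieldTopology.Exports numFieldNormedType.Exports.
Local Open Scope classical_set_scope.
Local Open Scope ring_scope.

Notation cmp := Defs.comp.
Section Aux.
Context {R : realType} {X : metricType R}.
Implicit Types (f : nat -> X -> X).

Lemma comp_add f (i a b : nat) (x : X) : cmp f i (a + b)%N x = cmp f (i + a)%N b (cmp f i a x).
Proof.
elim: b => [|b IH]; first by rewrite addn0.
by rewrite addnS /= IH addnA.
Qed.

Lemma comp_blk f (k n : nat) (x : X) : cmp (blk f k) 1 n x = cmp f 1 (k * n)%N x.
Proof.
elim: n => [|n IH]; first by rewrite muln0.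
rewrite /= IH /blk; have -> : (k * (1 + n - 1) + 1 = 1 + k * n)%N by lia.
rewrite mulnS (addnC k) comp_add.
by [].
Qed.

Lemma comp_aut (g : X -> X) (i j n : nat) (x : X) : cmp (autonomous g) i n x = cmp (autonomous g) j n x.
Proof. by elim: n => [|n IH] //=; rewrite IH. Qed.

Lemma comp_surj f (i n : nat) : (0 < i)%N -> (forall m, (0 < m)%N -> forall y, exists x, f m x = y) ->
  forall y, exists x, cmp f i n x = y.
Proof.
move=> i0 fs; elim: n => [|n IH] y; first by exists y.
have [z <-] := fs (i + n)%N (leq_trans i0 (leq_addr _ _)) y.
have [x <-] := IH z; by exists x.
Qed.

Lemma comp_cont f (i n : nat) : (0 < i)%N -> (forall m, (0 < m)%N -> continuous (f m)) ->
  continuous (cmp f i n).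
Proof.
move=> i0 fc; elim: n => [|n IH] /=; first by move=> x; exact: cvg_id.
move=> x; apply: continuous_comp; first exact: IH.
exact: fc (leq_trans i0 (leq_addr _ _)) _.
Qed.

Lemma comp_int f (i n : nat) : (0 < i)%N -> feebly_open f ->
  forall U : set X, open U -> U !=set0 -> (cmp f i n @` U)° !=set0.
Proof.
move=> i0 fo; elim: n => [|n IH] U Uo [u Uu].
  rewrite /= image_id; move/interior_id: Uo => ->; by exists u.
have [y Iy] := IH U Uo (ex_intro _ u Uu).
have := fo (i + n)%N (leq_trans i0 (leq_addr _ _)) _ (@open_interior _ (cmp f i n @` U)) (ex_intro _ y Iy).
move=> [z Hz]; exists z; move: z Hz; apply: interiorS.
move=> z [w /interior_subset [a Ua <-] <-]; by exists a.
Qed.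

Lemma bounded_X : compact [set: X] -> exists M : R, forall x y : X, mdist x y <= M.
Proof.
move=> cX.
have [a|X0] := pselect (exists a : X, True); last first.
  by exists 0 => x; exfalso; apply: X0; exists x.
case: a => a _.
have := (compact_near_coveringP _).1 cX R (pinfty_nbhs R) (fun M x => mdist a x < M) _.
case.
- move=> x _.
  exists (ball x 1, [set M | mdist a x + 1 < M]).
    split; first exact: nbhsx_ballx.
    apply: nbhs_pinfty_gt; exact: num_real.
  case=> y M [/= xy aM]; move: xy; rewrite ballEmdist /= => xy.
  have := metric_triangle a x y; lra.
move=> M0 [_ HM].
have Hb := HM (M0 + 1) ltac:(lra).
exists (M0 + 1 + (M0 + 1)) => x y.
apply: (le_trans (metric_triangle x a y)); rewrite metric_sym.
have := Hb x I; have := Hb y I; lra.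
Qed.

Lemma supD_lt (M : R) (HM : forall x y : X, mdist x y <= M) (h k : X -> X) (e : R) :
  supD h k < e -> forall x, mdist (h x) (k x) < e.
Proof.
move=> hs x; apply: le_lt_trans hs.
have hsup : has_sup (range (fun x => mdist (h x) (k x))).
  split; first by exists (mdist (h x) (k x)), x.
  by exists M => _ [y _ <-]; exact: HM.
by rewrite /supD; apply: (sup_upper_bound hsup); exists x.
Qed.

Lemma dist_close (h k : X -> X) (e : R) (a b : X) :
  (forall x, mdist (h x) (k x) < e) -> mdist (h a) (h b) < mdist (k a) (k b) + e + e.
Proof.
move=> H.
have := metric_triangle (h a) (k a) (h b).
have := metric_triangle (k a) (k b) (h b).
have := H a; have := H b; rewrite (metric_sym (k b) (h b)); lra.
Qed.

Lemma near_fin (h : nat -> X -> X) (x : X) (e : R) (m : nat) : 0 < e ->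
  (forall n, continuous (h n)) ->
  nbhs x (fun y => forall n, (n <= m)%N -> mdist (h n x) (h n y) < e).
Proof.
move=> e0 hc; elim: m => [|m IH].
  have H0 : nbhs x (h 0%N @^-1` ball (h 0%N x) e) := hc 0%N x _ (nbhsx_ballx (h 0%N x) _ e0).
  move: H0; apply: filterS => y; rewrite /= ballEmdist /= => H n; rewrite leqn0 => /eqP ->.
  exact: H.
have H1 : nbhs x (h m.+1 @^-1` ball (h m.+1 x) e) := hc m.+1 x _ (nbhsx_ballx (h m.+1 x) _ e0).
set A := (fun y => forall n, (n <= m)%N -> mdist (h n x) (h n y) < e).
set B := (fun y => forall n, (n <= m.+1)%N -> mdist (h n x) (h n y) < e).
have sub : A `&` (h m.+1 @^-1` ball (h m.+1 x) e) `<=` B.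
  move=> y [H2 H3] n; rewrite leq_eqVlt ltnS => /orP[/eqP->|].
    by move: H3; rewrite /= ballEmdist.
  exact: H2.
exact: (filterS sub (filterI IH H1)).
Qed.

End Aux.

Section Main.
Context {R : realType} {X : metricType R}.

Lemma dirA (f : nat -> X -> X) (g : X -> X) (M : R) (r : nat) (v : 'I_r -> nat) :
  (forall x y : X, mdist x y <= M) ->
  (forall i, (0 < v i)%N) ->
  collectively_converges f g -> feebly_open f ->
  multi_sensitive_wrt (autonomous g) v -> multi_sensitive_wrt f v.
Proof.
move=> HM vp cc fo [d d0 Hg].
have [N0 HN] := cc (d / 4) ltac:(lra).
exists (d / 2); first lra.
move=> U HU.
pose U' i := (cmp f 1 (v i * N0)%N @` U i)°.
have HU' : forall i, open (U' i) /\ U' i !=set0.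
  move=> i; split; first exact: open_interior.
  exact: comp_int (HU i).1 (HU i).2.
have [n Hn] := Hg U' HU'.
exists (N0 + n)%N => i.
have [n0 [u [w [Uu [Uw duw]]]]] := Hn i.
have [u0 Uu0 eu] := interior_subset Uu.
have [w0 Uw0 ew] := interior_subset Uw.
split; first by rewrite addn_gt0 n0 orbT.
exists u0, w0; split; first by [].
split; first by [].
rewrite !comp_blk mulnDr !comp_add eu ew.
rewrite !comp_blk in duw.
have vi := vp i.
have c1 : (N0 <= 1 + v i * N0)%N by nia.
have c2 : (0 < 1 + v i * N0)%N by lia.
have c3 : (0 < v i * n)%N by rewrite muln_gt0 vi n0.
have Hc := supD_lt M HM _ _ _ (HN (1 + v i * N0)%N (v i * n)%N c1 c2 c3).
have := @dist_close _ _ (cmp (autonomous g) 1 (v i * n)%N) (cmp f (1 + v i * N0)%N (v i * n)%N) (d / 4) u w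
  (fun x => ltac:(rewrite metric_sym; exact: Hc x)).
lra.
Qed.

Lemma dirB (f : nat -> X -> X) (g : X -> X) (M : R) (r : nat) (v : 'I_r -> nat) :
  (forall x y : X, mdist x y <= M) ->
  (forall n, (0 < n)%N -> continuous (f n)) ->
  (forall n, (0 < n)%N -> forall y : X, exists x : X, f n x = y) ->
  (forall i, (0 < v i)%N) ->
  collectively_converges f g ->
  multi_sensitive_wrt f v -> multi_sensitive_wrt (autonomous g) v.
Proof.
move=> HM fc fs vp cc [d d0 Hf].
have [N0 HN] := cc (d / 4) ltac:(lra).
exists (d / 2); first lra.
move=> U HU.
have Hch : forall i : 'I_r, exists V : set X, (open V /\ V !=set0) /\
    (forall y, V y -> U i (cmp f 1 (v i * N0)%N y)) /\
    (forall a b, V a -> V b -> forall m, (m <= N0)%N ->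
       mdist (cmp f 1 (v i * m)%N a) (cmp f 1 (v i * m)%N b) <= d).
  move=> i.
  have [y Uy] := (HU i).2.
  have [x ex] := comp_surj f 1 (v i * N0)%N (ltn0Sn 0) fs y.
  pose P z := U i (cmp f 1 (v i * N0)%N z) /\ forall m, (m <= N0)%N ->
     mdist (cmp f 1 (v i * m)%N x) (cmp f 1 (v i * m)%N z) < d / 2.
  have nP : nbhs x P.
    apply: filterI.
      apply: (comp_cont f 1 (v i * N0)%N (ltn0Sn 0) fc x).
      apply: open_nbhs_nbhs; split; first exact: (HU i).1.
      by rewrite ex.
    apply: (near_fin (fun m => cmp f 1 (v i * m)%N)); first lra.
    by move=> m; exact: (comp_cont f 1 _ (ltn0Sn 0) fc).
  exists P°; split; first split.
  - exact: open_interior.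
  - by exists x; exact: nbhs_singleton (nbhs_interior nP).
  split; first by move=> z /interior_subset [].
  move=> a b /interior_subset [_ Ha] /interior_subset [_ Hb] m hm.
  have := Ha m hm; have := Hb m hm.
  have := metric_triangle (cmp f 1 (v i * m)%N a) (cmp f 1 (v i * m)%N x) (cmp f 1 (v i * m)%N b).
  have := metric_sym (cmp f 1 (v i * m)%N a) (cmp f 1 (v i * m)%N x); lra.
have [V HV] := choice Hch.
have [n Hn] := Hf V (fun i => (HV i).1).
exists (n - N0)%N => i.
have [n0 [a [b [Va [Vb dab]]]]] := Hn i.
rewrite !comp_blk in dab.
have nN : (N0 < n)%N.
  rewrite ltnNge; apply/negP => nN.
  have := (HV i).2.2 a b Va Vb n nN; lra.
have vi := vp i.
split; first by rewrite subn_gt0.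
exists (cmp f 1 (v i * N0)%N a), (cmp f 1 (v i * N0)%N b).
split; first exact: (HV i).2.1.
split; first exact: (HV i).2.1.
rewrite !comp_blk.
have e : (v i * n = v i * N0 + v i * (n - N0))%N by rewrite -mulnDr subnKC // ltnW.
rewrite e !comp_add in dab.
have c1 : (N0 <= 1 + v i * N0)%N by nia.
have c2 : (0 < 1 + v i * N0)%N by lia.
have c3 : (0 < v i * (n - N0))%N by rewrite muln_gt0 vi subn_gt0 nN.
have Hc := supD_lt M HM _ _ _ (HN (1 + v i * N0)%N (v i * (n - N0))%N c1 c2 c3).
have := @dist_close _ _ (cmp f (1 + v i * N0)%N (v i * (n - N0))%N) (cmp (autonomous g) 1 (v i * (n - N0))%N) (d / 4)
  (cmp f 1 (v i * N0)%N a) (cmp f 1 (v i * N0)%N b) Hc.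
lra.
Qed.

End Main.

Theorem mainTheorem7 (R : realType) (X : metricType R)
  (f : nat -> X -> X) (g : X -> X) :
  compact [set: X] ->
  (forall n, (0 < n)%N -> continuous (f n)) ->
  (forall n, (0 < n)%N -> forall y : X, exists x : X, f n x = y) ->
  (fun n => supD (f n) g) @ \oo --> (0 : R) ->
  collectively_converges f g ->
  feebly_open f ->
  (strongly_multi_sensitive f <-> strongly_multi_sensitive (autonomous g)) /\
  (N_sensitive f <-> N_sensitive (autonomous g)).
Proof.
move=> cX fc fs _ cc fo.
have [M HM] := bounded_X cX.
split; split.
- move=> Hf r v r0 vp; exact: (dirB _ _ _ _ _ HM fc fs vp cc (Hf r v r0 vp)).
- move=> Hg r v r0 vp; exact: (dirA _ _ _ _ _ HM vp cc fo (Hg r v r0 vp)).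
- move=> Hf n n0; exact: (dirB _ _ _ _ _ HM fc fs (fun i => ltn0Sn _) cc (Hf n n0)).
- move=> Hg n n0; exact: (dirA _ _ _ _ _ HM (fun i => ltn0Sn _) cc fo (Hg n n0)).
Qed.
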